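(* For every integer $m>1$ there exists a finite group $G$ with $s(G) > m\,\Gamma_e(G)$.
   Context: For a finite group $G$, $s(G)$ is the sum of all entries of its complex character table and $\Gamma_e(G)$ is the sum of the degrees of its irreducible complex characters. *)

(* Defs.v *)
From HB Require Import structures.
From mathcomp Require Import all_boot all_order all_algebra all_fingroup all_solvable all_field all_character.
Set Implicit Arguments. Unset Strict Implicit. Unset Printing Implicit Defensive.
Import Order.TTheory GRing.Theory Num.Theory.
Local Open Scope ring_scope.

Definition char_table_sum (gT : finGroupType) (G : {group gT}) : algC :=
  \sum_(i : Iirr G) \sum_(xG in classes G) 'chi[G]_i (repr xG).

Definition gamma_e (gT : finGroupType) (G : {group gT}) : algC :=
  \sum_(i : Iirr G) 'chi[G]_i 1%g.

(* Main.v *)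
Require Import Defs.
From HB Require Import structures.
From mathcomp Require Import all_boot all_order all_algebra all_fingroup all_solvable all_field all_character.
From mathcomp Require Import zify.
Import Order.TTheory GRing.Theory Num.Theory.
Local Open Scope ring_scope.

Lemma amgm (c n : nat) : (2 * c * n <= n ^ 2 + c ^ 2)%N.
Proof.
rewrite !expnS !expn0 !muln1.
case: (leqP n c) => h.
  have [d ->] : exists d, c = (n + d)%N by exists (c - n)%N; lia.
  nia.
have [d ->] : exists d, n = (c + d)%N by exists (n - c)%N; lia.
nia.
Qed.

Section S.
Variable gT : finGroupType.
Variable G : {group gT}.

Lemma sum_cfdot_irr (k : Iirr G) : \sum_i '['chi[G]_i, 'chi_k] = 1.
Proof.
rewrite (bigD1 k) //= cfdot_irr eqxx big1 ?addr0 // => i /negPf ik.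
by rewrite cfdot_irr ik.
Qed.

Lemma keyK (H : {group gT}) : H \subset G -> (G^`(1))%g \subset H ->
  \sum_(g in H) \sum_i 'chi[G]_i g = #|G|%:R.
Proof.
move=> sHG sG'H.
have nsHG : (H <| G)%g by apply: sub_der1_normal.
have abQ : abelian (G / H)%g by apply: sub_der1_abelian.
have one : '1_H = (#|(G / H)%g|%:R)^-1 *: (cfReg (G / H)%g %% H)%CF.
  apply/cfunP => x; rewrite !cfunE cfuniE //.
  have [Gx | nGx] := boolP (x \in G); last first.
    have nHx : x \notin H by apply: contra nGx; apply: (subsetP sHG).
    by rewrite (negPf nHx) cfun0 ?mulr0.
  rewrite cfModE // cfRegE.
  have nHx : x \in 'N(H)%g by apply: (subsetP (normal_norm nsHG)).
  have -> : (coset H x == 1%g :> coset_of H) = (x \in H).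
    apply/eqP/idP => [/(coset_idr nHx) //|]; exact: coset_id.
  case: (x \in H); rewrite ?mulr0n ?mulr0 // mulr1n mulVf //.
  by rewrite pnatr_eq0 -lt0n cardG_gt0.
have HS (i : Iirr G) : \sum_(g in H) 'chi[G]_i g = #|G|%:R * '['chi_i, '1_H].
  rewrite cfdotE mulrA mulfV ?pnatr_eq0 -?lt0n ?cardG_gt0 // mul1r.
  rewrite [RHS](big_setID H) /= (setIidPr sHG) [X in _ = _ + X]big1 ?addr0.
    by apply: eq_bigr => g Hg; rewrite cfuniE // Hg conjC1 mulr1.
  by move=> g /setDP[_ nHg]; rewrite cfuniE // (negPf nHg) conjC0 mulr0.
rewrite exchange_big /=.
rewrite (eq_bigr _ (fun i _ => HS i)) -mulr_sumr.
suff -> : \sum_i '['chi[G]_i, '1_H] = 1 by rewrite mulr1.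
rewrite one.
under eq_bigr do rewrite cfdotZr.
rewrite -mulr_sumr cfReg_sum.
under eq_bigr do rewrite raddf_sum cfdot_sumr.
rewrite exchange_big /=.
under eq_bigr do (under eq_bigr do rewrite linearZ /= -mod_IirrE // cfdotZr).
under eq_bigr do rewrite -mulr_sumr sum_cfdot_irr mulr1.
have lin := char_abelianP _ abQ.
under eq_bigr do rewrite (lin_char1 (lin _)) conjC1.
rewrite sumr_const card_ord NirrE.
move: abQ; rewrite card_classes_abelian => /eqP ->.
by rewrite fmorphV /= conjC_nat mulVf // pnatr_eq0 -lt0n cardG_gt0.
Qed.
Lemma classsum (phi : gT -> algC) :
  {in G &, forall g h, phi (g ^ h)%g = phi g} ->
  \sum_(xG in classes G) phi (repr xG) =
  \sum_(g in G) phi g / (#|(g ^: G)%g|%:R).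
Proof.
move=> phiJ.
rewrite (sum_by_classes (F := fun g => phi g / (#|(g ^: G)%g|%:R))); last first.
  by move=> g h Gg Gh /=; rewrite phiJ // classGidl.
apply: eq_bigr => _ /imsetP[x Gx ->].
have [y Gy ->] := repr_class G x.
rewrite classGidl // mulrC -mulrA mulVf ?mulr1 //.
by rewrite pnatr_eq0 -lt0n card_gt0; apply/set0Pn; exists x; apply: class_refl.
Qed.

Lemma s_class2 : (G^`(1))%g \subset ('Z(G))%g -> char_table_sum G = #|G|%:R.
Proof.
move=> hZ.
have G0 : (#|G|%:R : algC) != 0 by rewrite pnatr_eq0 -lt0n cardG_gt0.
apply: (mulfI G0).
rewrite /char_table_sum.
rewrite (eq_bigr (fun i => \sum_(g in G) 'chi[G]_i g / #|(g ^: G)%g|%:R)); last first.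
  by move=> i _; apply: classsum => g h Gg Gh; rewrite cfunJ.
rewrite exchange_big /= mulr_sumr.
have step (g : gT) : g \in G ->
   #|G|%:R * \sum_i 'chi[G]_i g / #|(g ^: G)%g|%:R
   = \sum_(h in ('C_G[g])%g) \sum_i 'chi[G]_i g.
  move=> Gg; rewrite sumr_const -mulr_suml.
  rewrite -(Lagrange (subsetIl G ('C[g])%g)) index_cent1 natrM.
  rewrite -mulrA [X in _ * X]mulrC divfK; last by rewrite pnatr_eq0 -lt0n card_gt0; apply/set0Pn; exists g; apply: class_refl.
  by rewrite mulrC mulr_natr.
rewrite (eq_bigr _ step).
have e2 : \sum_(g in G) \sum_(h in ('C_G[g])%g) \sum_i 'chi[G]_i g =
          \sum_(g in G) \sum_(h in G) (h \in ('C[g])%g)%:R * \sum_i 'chi[G]_i g.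
  apply: eq_bigr => g Gg; rewrite [RHS](big_setID ('C[g])%g) /= [X in _ = _ + X]big1 ?addr0.
    by apply: eq_bigr => h /setIP[_ ->]; rewrite mul1r.
  by move=> h /setDP[_ /negPf ->]; rewrite mul0r.
rewrite e2 exchange_big /=.
have e3 (h : gT) : h \in G -> \sum_(g in G) (h \in ('C[g])%g)%:R * \sum_i 'chi[G]_i g
   = \sum_(g in ('C_G[h])%g) \sum_i 'chi[G]_i g.
  move=> Gh; rewrite (big_setID ('C[h])%g) /= [X in _ + X]big1 ?addr0.
    by apply: eq_bigr => g /setIP[_ ]; rewrite cent1C => ->; rewrite mul1r.
  by move=> g /setDP[_ ]; rewrite cent1C => /negPf ->; rewrite mul0r.
rewrite (eq_bigr _ e3).
rewrite (eq_bigr (fun _ => #|G|%:R)); last first.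
  move=> h Gh; apply: keyK; first exact: subsetIl.
  apply: (subset_trans hZ); apply: setIS.
  by apply/subsetP => x /centP cx; apply/cent1P; apply: cx.
by rewrite sumr_const mulr_natr.
Qed.

Lemma classes_bound (p : nat) : (0 < p)%N ->
  (forall g, g \in G -> g \notin ('Z(G))%g -> (p <= #|(g ^: G)%g|)%N) ->
  (#|classes G| * p <= #|G| + p * #|('Z(G))%g|)%N.
Proof.
move=> p0 hp.
have p0' : (0 : algC) < p%:R by rewrite ltr0n.
rewrite -(ler_nat algC) natrD !natrM.
have e1 : (#|classes G|%:R : algC) = \sum_(g in G) 1 / #|(g ^: G)%g|%:R.
  rewrite -(classsum (fun _ => 1)) // sumr_const //.
have le1 : \sum_(g in G) 1 / (#|(g ^: G)%g|%:R : algC) <=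
           \sum_(g in G) ((if g \in ('Z(G))%g then 1 else 0) + p%:R^-1).
  apply: ler_sum => g Gg.
  have cg0 : (0 : algC) < #|(g ^: G)%g|%:R.
    by rewrite ltr0n card_gt0; apply/set0Pn; exists g; apply: class_refl.
  rewrite mul1r; case: ifP => Zg.
    rewrite (le_trans (y := 1)) //.
      by rewrite invf_le1 // ler1n card_gt0; apply/set0Pn; exists g; apply: class_refl.
    by rewrite lerDl invr_ge0 ltW.
  rewrite add0r lef_pV2 ?posrE // ler_nat; apply: hp => //; rewrite Zg.
  done.
rewrite e1; apply: (le_trans (ler_wpM2r (ltW p0') le1)).
rewrite big_split /= -big_mkcondr /= sumr_const.
have -> : #|[pred g in G | g \in ('Z(G))%g]| = #|('Z(G))%g|.
  apply: eq_card => g /=; rewrite [in LHS]inE /=.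
  by apply/andP/idP => [[] //|Zg]; split => //; apply: (subsetP (center_sub G)).
rewrite sumr_const -(mulr_natr (p%:R^-1)) mulrDl [X in _ + X]mulrAC mulVf ?mul1r ?gt_eqF //.
by rewrite addrC mulrC.
Qed.

Lemma gamma_bound (c : nat) :
  gamma_e G = (\sum_i ('chi[G]_i 1%g))%R /\
  (exists n : Iirr G -> nat, gamma_e G = (\sum_i n i)%N%:R /\
     (2 * c * (\sum_i n i) <= #|G| + c ^ 2 * Nirr G)%N).
Proof.
split => //.
exists (fun i => Num.truncn ('chi[G]_i 1%g)).
have nE i : 'chi[G]_i 1%g = (Num.truncn ('chi[G]_i 1%g))%:R by rewrite truncnK // Cnat_irr1.
split; first by rewrite /gamma_e natr_sum; apply: eq_bigr => i _; rewrite -nE.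
have sq : (\sum_i (Num.truncn ('chi[G]_i 1%g)) ^ 2)%N = #|G|.
  apply/eqP; rewrite -(eqr_nat algC) -irr_sum_square natr_sum.
  by apply/eqP; apply: eq_bigr => i _; rewrite natrX -nE.
have -> : (c ^ 2 * Nirr G = \sum_(i : Iirr G) c ^ 2)%N by rewrite sum_nat_const card_ord mulnC.
rewrite -sq -big_split /= big_distrr /=.
by apply: leq_sum => i _; apply: amgm.
Qed.
End S.

Lemma final_arith (m p k N : nat) : (1 < m)%N -> (8 * m ^ 2 < p)%N ->
  (2 * (2 * m) * N <= p ^ 3 + (2 * m) ^ 2 * k)%N ->
  (k * p <= p ^ 3 + p * p)%N -> (m * N < p ^ 3)%N.
Proof.
move=> m1 hp h1 h2.
have p0 : (0 < p)%N by lia.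
have hk : (k <= p * p + p)%N.
  rewrite -(leq_pmul2r p0); move: h2; rewrite !expnS expn0 muln1; nia.
move: h1 hp; rewrite !expnS !expn0 !muln1 => h1 hp.
nia.
Qed.

Theorem proposition2p9 :
  forall m : nat, (1 < m)%N ->
  exists (gT : finGroupType) (G : {group gT}),
    (m%:R : algC) * gamma_e G < char_table_sum G.
Proof.
move=> m m1.
have [p hp p_pr] := prime_above (8 * m ^ 2).
pose G := [set: Pextraspecial.gtype p]%G.
exists (Pextraspecial.gtype p), G.
have cardG : #|G| = (p ^ 3)%N by apply: card_pX1p2.
have [[_ derZ] primeZ] : extraspecial G by apply: pX1p2_extraspecial.
have cardZ : #|('Z(G))%g| = p.
  have := cardSg (center_sub G); rewrite cardG.
  rewrite Euclid_dvdX // andbT dvdn_prime2 //; by move/eqP.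
have hZ : (G^`(1))%g \subset ('Z(G))%g by rewrite derZ.
rewrite s_class2 //.
have [_ [N [gE gB]]] := gamma_bound _ G (2 * m).
have kB : (#|classes G| * p <= #|G| + p * #|('Z(G))%g|)%N.
  apply: classes_bound; first exact: prime_gt0.
  move=> g Gg nZg.
  have : (#|(g ^: G)%g| %| p ^ 3)%N by rewrite -cardG -index_cent1 dvdn_indexg.
  case/(dvdn_pfactor _ _ p_pr) => j _ ej.
  rewrite ej; case: j ej => [|j] ej.
    exfalso; apply: (negP nZg).
    have e1 : 'C_G[g]%g = G :> {set _}.
      by apply: index1g; [apply: subsetIl | rewrite index_cent1 ej].
    rewrite inE Gg -sub_cent1 /=.
    by rewrite -{1}e1 subsetIr.
  by rewrite -{1}(expn1 p) leq_pexp2l // prime_gt0.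
rewrite gE -natrM ltr_nat cardG.
apply: (@final_arith m p #|classes G| (\sum_i N i) m1 hp).
  by rewrite -cardG -NirrE.
by rewrite cardG cardZ in kB.
Qed.
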